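(* Let $S^*\subset(0,\infty)$ be an open set that is additive (i.e. $a,b\in S^*\Rightarrow a+b\in S^*$), and let $S=[0,\infty)\setminus S^*$ (a closed set). Then $S$ is bounded; let $L=\sup S$. For $x\in[0,L]$ define $a(x)=\sup\{y\in\partial S: y\le x\}$, $b(x)=\inf\{y\in\partial S: y\ge x\}$, $\alpha(x)=x-a(x)$ and $\beta(x)=b(x)-x$, where $\partial S$ is the boundary of $S$ in $\mathbb{R}$. Then: (a) for every $s\in S$, $\alpha(s)\in S$ and $\beta(s)\in S$; (b) if $s^*\in S^*$ and $x\in[0,L]$ are such that both $x$ and $s^*+x$ lie in $[0,L]$ and in the interior of $S$, then $\alpha(s^*+x)<\alpha(x)$ and $\beta(s^*+x)<\beta(x)$; (c) if $s^*\in S^*$ and $x\in[0,L]$ are such that both $x$ and $s^*+x$ lie in $[0,L]\cap S^*$, then $\alpha(s^*+x)>\alpha(x)$ and $\beta(s^*+x)>\beta(x)$.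
   Context: For $x\in S^*\cap[0,L]$, $(a(x),b(x))$ is the maximal interval of $S^*$ containing $x$; for $x$ in the interior of $S$, $(a(x),b(x))$ is the maximal interval of the interior of $S$ containing $x$; for $x\in\partial S$, $a(x)=b(x)=x$. The boundedness of $S$ is a known consequence of the hypotheses. *)

(* Defs.v *)
From HB Require Import structures.
From mathcomp Require Import all_boot all_order all_algebra.
From mathcomp Require Import all_classical all_reals all_analysis.
Set Implicit Arguments. Unset Strict Implicit. Unset Printing Implicit Defensive.
Import Order.TTheory GRing.Theory Num.Theory.
Import numFieldNormedType.Exports.
Local Open Scope classical_set_scope.
Local Open Scope ring_scope.

Section Defs.
Variable R : realType.

Definition Scompl (Sstar : set R) : set R := [set x | 0 <= x /\ ~ Sstar x].

Definition boundary (A : set R) : set R := closure A `\` interior A.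

Definition a_fun (S : set R) (x : R) : R := sup [set y | boundary S y /\ y <= x].
Definition b_fun (S : set R) (x : R) : R := inf [set y | boundary S y /\ x <= y].
Definition alpha (S : set R) (x : R) : R := x - a_fun S x.
Definition beta (S : set R) (x : R) : R := b_fun S x - x.

End Defs.

(* Main.v *)
Require Import Defs.
From HB Require Import structures.
From mathcomp Require Import all_boot all_order all_algebra.
From mathcomp Require Import all_classical all_reals all_analysis.
From mathcomp Require Import ring lra.
Import Order.TTheory GRing.Theory Num.Theory.
Import numFieldNormedType.Exports.
Local Open Scope classical_set_scope.
Local Open Scope ring_scope.
Set Implicit Arguments. Unset Strict Implicit. Unset Printing Implicit Defensive.

Lemma int_ball (R : realType) (A : set R) x :
  interior A x <-> exists2 e : R, 0 < e & forall y, `|x - y| < e -> A y.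
Proof.
rewrite /interior; split.
  by move=> /nbhs_ballP [e e0 H]; exists e => // y hy; apply: H.
by move=> [e e0 H]; apply/nbhs_ballP; exists e => // y hy; apply: H.
Qed.

Lemma open_ball (R : realType) (A : set R) x : open A -> A x ->
  exists2 e : R, 0 < e & forall y, `|x - y| < e -> A y.
Proof. by move=> oA Ax; apply/int_ball; rewrite openE in oA; exact: oA. Qed.

Lemma bdry_closedE (R : realType) (A : set R) y : closed A ->
  boundary A y <-> A y /\ ~ interior A y.
Proof.
move=> cA; have E := (closure_id A).1 cA.
by rewrite /boundary -E.
Qed.

Lemma bdry_closed (R : realType) (A : set R) : closed (boundary A).
Proof.
rewrite /boundary setDE; apply: closedI; first exact: closed_closure.
exact/open_closedC/open_interior.
Qed.

Lemma closed_sup_in (R : realType) (A : set R) : closed A -> A !=set0 ->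
  has_ubound A -> A (sup A).
Proof.
move=> cA A0 hA; have := closure_sup A0 hA; by rewrite -((closure_id A).1 cA).
Qed.

Lemma closed_inf_in (R : realType) (A : set R) : closed A -> A !=set0 ->
  has_lbound A -> A (inf A).
Proof.
move=> cA A0 hA; apply: contrapT => nA.
have [e e0 H] := open_ball (closed_openC cA) nA.
have [w Aw wlt] := inf_adherent e0 (conj A0 hA).
have := ge_inf hA Aw => le.
apply: (H w) => //; rewrite ltr_distl; apply/andP; split; lra.
Qed.

Lemma conn1 (R : realType) (A : set R) p q : closed A -> p <= q -> A p -> ~ A q ->
  exists m, [/\ p <= m, m <= q, A m & ~ interior A m].
Proof.
move=> cA pq Ap nAq.
pose E := [set w | p <= w] `&` ([set w | w <= q] `&` A).
have cE : closed E.
  apply: closedI; first exact: closed_ge.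
  by apply: closedI => //; exact: closed_le.
have E0 : E !=set0 by exists p; split; [exact: lexx| split; [exact: pq|exact: Ap]].
have hE : has_ubound E by exists q => w [_ []].
have [/= pm [/= mq Am]] := closed_sup_in cE E0 hE.
exists (sup E); split => // /int_ball [e e0 H].
have mq' : sup E < q.
  rewrite lt_neqAle mq andbT; apply/eqP => h; apply: nAq; by rewrite -h.
have [h|h] := leP (sup E + e / 2) q.
- have Ew : E (sup E + e / 2).
    split; first (simpl; lra). split => //. apply: H.
    rewrite ltr_distl; apply/andP; split; lra.
  have := ub_le_sup hE Ew; lra.
- apply: nAq; apply: H; rewrite ltr_distl; apply/andP; split; lra.
Qed.

Lemma conn2 (R : realType) (A : set R) p q : closed A -> p <= q -> ~ A p -> A q ->
  exists m, [/\ p <= m, m <= q, A m & ~ interior A m].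
Proof.
move=> cA pq nAp Aq.
pose E := [set w | p <= w] `&` ([set w | w <= q] `&` A).
have cE : closed E.
  apply: closedI; first exact: closed_ge.
  by apply: closedI => //; exact: closed_le.
have E0 : E !=set0 by exists q; split; [exact: pq| split; [exact: lexx|exact: Aq]].
have hE : has_lbound E by exists p => w [].
have [/= pm [/= mq Am]] := closed_inf_in cE E0 hE.
exists (inf E); split => // /int_ball [e e0 H].
have mp' : p < inf E.
  rewrite lt_neqAle pm andbT; apply/eqP => h; apply: nAp; by rewrite h.
have [h|h] := leP p (inf E - e / 2).
- have Ew : E (inf E - e / 2).
    split => //. split; first (simpl; lra). apply: H.
    rewrite ltr_distl; apply/andP; split; lra.
  have := ge_inf hE Ew; lra.
- apply: nAp; apply: H; rewrite ltr_distl; apply/andP; split; lra.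
Qed.

Definition good (R : realType) (Sstar : set R) :=
  [/\ open Sstar, Sstar `<=` [set x | 0 < x] &
      forall u v, Sstar u -> Sstar v -> Sstar (u + v)].

Section Main.
Context (R : realType) (Sstar : set R) (G : good Sstar).
Let S := Scompl Sstar.

Lemma S_closed : closed S.
Proof.
have -> : S = [set x | 0 <= x] `&` ~` Sstar by [].
case: G => oS _ _; apply: closedI; first exact: closed_ge.
exact: open_closedC.
Qed.

Lemma bS y : boundary S y <-> S y /\ ~ interior S y.
Proof. exact: bdry_closedE S_closed. Qed.

Lemma notS z : 0 <= z -> ~ S z -> Sstar z.
Proof. by move=> z0 nz; apply: contrapT => h; apply: nz. Qed.

Lemma S0 : S 0.
Proof. by case: G => _ pS _; split => // /pS /=; rewrite ltxx. Qed.

Lemma Kadd y t : boundary S y -> Sstar t -> Sstar (y + t).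
Proof.
case: G => oS pS aS.
move=> /bS [[y0 nSy] nI] St.
have [r r0 H] := open_ball oS St.
have [->|yn0] := eqVneq y 0; first by rewrite add0r.
have yp : 0 < y by rewrite lt_neqAle eq_sym yn0 y0.
pose e := Num.min r y.
have e0 : 0 < e by rewrite lt_min r0 yp.
have [z [hz nSz]] : exists z, `|y - z| < e /\ ~ S z.
  apply: contrapT => Hn; apply: nI; apply/int_ball; exists e => // z hz.
  by apply: contrapT => nz; apply: Hn; exists z.
move: hz; rewrite lt_min => /andP[hzr hzy].
have zp : 0 < z by move: hzy; rewrite ltr_distl => /andP[? ?]; lra.
have Sz := notS (ltW zp) nSz.
have -> : y + t = z + (t + (y - z)) by ring.
apply: aS => //; apply: H.
have -> : t - (t + (y - z)) = - (y - z) by ring.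
by rewrite normrN.
Qed.

Lemma Smul y n : Sstar y -> Sstar (y *+ n.+1).
Proof.
case: G => _ _ aS Sy; elim: n => [|n IH]; first by rewrite mulr1n.
by rewrite mulrS; apply: aS.
Qed.

Lemma Sbound : Sstar !=set0 -> has_ubound S.
Proof.
case: G => oS pS aS [s0 Ss0].
have s0p : 0 < s0 := pS _ Ss0.
have [r r0 H] := open_ball oS Ss0.
exists (s0 * (s0 + r) / r) => x [x0 nSx].
rewrite leNgt; apply/negP => xM; apply: nSx.
have sr0 : 0 < s0 + r by lra.
pose u := x / (s0 + r).
have u0 : 0 <= u by rewrite /u divr_ge0 // ltW.
have hx : x = u * (s0 + r) by rewrite /u divfK // gt_eqF.
have /andP[lu uk] := truncn_itv u0.
set n := Num.truncn u in lu uk.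
pose k : R := n.+1%:R.
have k0 : 0 < k by rewrite /k ltr0n.
have hk : k = n%:R + 1 by rewrite /k -natr1.
have xr : s0 * (s0 + r) < x * r by rewrite -ltr_pdivrMr.
have ur : s0 < u * r.
  rewrite hx in xr.
  have : s0 * (s0 + r) < (u * r) * (s0 + r) by lra.
  by rewrite ltr_pM2r.
have key1 : k * (s0 - r) < x.
  rewrite hx; rewrite hk in uk *. nra.
have key2 : x < k * (s0 + r) by rewrite hx ltr_pM2r.
have Sy : Sstar (x / k).
  apply: H; rewrite ltr_distl; apply/andP; split.
  - by rewrite ltrBlDr ltr_pdivrMr // mulrC.
  - by rewrite -ltrBlDr ltr_pdivlMr // mulrC.
have := Smul n Sy; rewrite -mulr_natr divfK //; by rewrite pnatr_eq0.
Qed.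

Lemma bS_S y : boundary S y -> S y.
Proof. by move=> /bS []. Qed.

Lemma b0 : boundary S 0.
Proof.
apply/bS; split; first exact: S0.
move=> /int_ball [e e0 H].
have [h _] : S (0 - e / 2).
  apply: H; rewrite opprB subr0 ger0_norm; lra.
move: h; lra.
Qed.

Lemma bL : has_ubound S -> boundary S (sup S).
Proof.
move=> hub; apply/bS; split.
  by apply: closed_sup_in => //; [exact: S_closed | exists 0; exact: S0].
move=> /int_ball [e e0 H].
have h : S (sup S + e / 2).
  apply: H; rewrite opprD addNKr normrN ger0_norm; lra.
have := ub_le_sup hub h; lra.
Qed.

Lemma afacts x : 0 <= x -> boundary S (a_fun S x) /\ a_fun S x <= x.
Proof.
move=> x0; apply: (@closed_sup_in _ [set y | boundary S y /\ y <= x]).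
- by apply: closedI; [exact: bdry_closed | exact: closed_le].
- by exists 0; split => //; exact: b0.
- by exists x => y [].
Qed.

Lemma a_ub x y : boundary S y -> y <= x -> y <= a_fun S x.
Proof.
move=> By yx; apply: (@ub_le_sup _ [set y | boundary S y /\ y <= x]) => //.
by exists x => w [].
Qed.

Lemma bfacts x : has_ubound S -> x <= sup S ->
  boundary S (b_fun S x) /\ x <= b_fun S x.
Proof.
move=> hub xL; apply: (@closed_inf_in _ [set y | boundary S y /\ x <= y]).
- by apply: closedI; [exact: bdry_closed | exact: closed_ge].
- by exists (sup S); split => //; exact: bL.
- by exists x => y [].
Qed.

Lemma b_lb x y : boundary S y -> x <= y -> b_fun S x <= y.
Proof.
move=> By yx; apply: (@ge_inf _ [set y | boundary S y /\ x <= y]) => //.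
by exists x => w [].
Qed.

Lemma left_in x z : S x -> a_fun S x < z -> z <= x -> S z.
Proof.
move=> Sx az zx; apply: contrapT => nSz.
have [m [zm mx Sm nI]] := conn2 S_closed zx nSz Sx.
have := a_ub (x:=x) (proj2 (bS m) (conj Sm nI)) mx; lra.
Qed.

Lemma right_in x z : S x -> x <= z -> z < b_fun S x -> S z.
Proof.
move=> Sx xz zb; apply: contrapT => nSz.
have [m [xm mz Sm nI]] := conn1 S_closed xz Sx nSz.
have := b_lb (proj2 (bS m) (conj Sm nI)) xm; lra.
Qed.

Lemma left_out x z : ~ S x -> a_fun S x < z -> z <= x -> ~ S z.
Proof.
move=> nSx az zx Sz.
have [m [zm mx Sm nI]] := conn1 S_closed zx Sz nSx.
have := a_ub (x:=x) (proj2 (bS m) (conj Sm nI)) mx; lra.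
Qed.

Lemma right_out x z : ~ S x -> x <= z -> z < b_fun S x -> ~ S z.
Proof.
move=> nSx xz zb Sz.
have [m [xm mz Sm nI]] := conn2 S_closed xz nSx Sz.
have := b_lb (proj2 (bS m) (conj Sm nI)) xm; lra.
Qed.

End Main.

Unset Implicit Arguments.

Theorem lemma3 (R : realType) (Sstar : set R)
  (Sstar_open : open Sstar)
  (Sstar_pos : Sstar `<=` [set x | 0 < x])
  (Sstar_add : forall u v, Sstar u -> Sstar v -> Sstar (u + v))
  (Sstar_nonempty : Sstar !=set0) :
  let S := Scompl Sstar in
  let L := sup S in
  has_ubound S /\
  (* (a) *)
  (forall s, S s -> S (alpha S s) /\ S (beta S s)) /\
  (* (b) *)
  (forall sstar x, Sstar sstar ->
     0 <= x <= L -> 0 <= sstar + x <= L ->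
     interior S x -> interior S (sstar + x) ->
     alpha S (sstar + x) < alpha S x /\ beta S (sstar + x) < beta S x) /\
  (* (c) *)
  (forall sstar x, Sstar sstar ->
     0 <= x <= L -> 0 <= sstar + x <= L ->
     Sstar x -> Sstar (sstar + x) ->
     alpha S x < alpha S (sstar + x) /\ beta S x < beta S (sstar + x)).
Proof.
cbv zeta.
have G : good Sstar by split.
have hub := Sbound G Sstar_nonempty.
have SS : forall z, Scompl Sstar z -> Sstar z -> False by move=> z [].
split; first exact: hub.
split.
  move=> s Ss; have s0 := Ss.1; have sL := ub_le_sup hub Ss.
  have [Ba as_] := afacts G s0; have [Bb sb] := bfacts G hub sL.
  split.
    rewrite /alpha; split; first lra.
    move=> h; have := Kadd G Ba h; rewrite addrC subrK; exact: Ss.2.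
  rewrite /beta; split; first lra.
  move=> h; have up := Sstar_pos _ h; move: up => /= up.
  have Sau := Kadd G Ba h.
  have [sa|sa] := leP s (a_fun (Scompl Sstar) s).
    have eas : a_fun (Scompl Sstar) s = s by apply/eqP; rewrite eq_le sa as_.
    rewrite eas in Ba.
    have := b_lb Ba (lexx s); lra.
  have [h1|h1] := leP (a_fun (Scompl Sstar) s + (b_fun (Scompl Sstar) s - s)) s.
    apply: (SS _ _ Sau); apply: (left_in G Ss) => //; lra.
  apply: (SS _ _ Sau); apply: (right_in G Ss); lra.
split.
  move=> t x St /andP[x0 xL] /andP[y0 yL] Ix Iy.
  have Sx := interior_subset Ix; have Sy := interior_subset Iy.
  have [Ba ax] := afacts G x0; have [Bb xb] := bfacts G hub xL.
  have [BA ay] := afacts G y0; have [BB yb] := bfacts G hub yL.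
  rewrite /alpha /beta; split.
    have Sat := Kadd G Ba St.
    suff : a_fun (Scompl Sstar) x + t < a_fun (Scompl Sstar) (t + x) by lra.
    rewrite ltNge; apply/negP => h.
    have [e|ne] := eqVneq (a_fun (Scompl Sstar) (t + x)) (a_fun (Scompl Sstar) x + t).
      by apply: (SS _ (bS_S G BA)); rewrite e.
    apply: (SS _ _ Sat); apply: (left_in G Sy); last lra.
    by rewrite lt_neqAle ne h.
  have Sbt := Kadd G Bb St.
  suff : b_fun (Scompl Sstar) (t + x) < b_fun (Scompl Sstar) x + t by lra.
  rewrite ltNge; apply/negP => h.
  have [e|ne] := eqVneq (b_fun (Scompl Sstar) x + t) (b_fun (Scompl Sstar) (t + x)).
    by apply: (SS _ (bS_S G BB)); rewrite -e.
  apply: (SS _ _ Sbt); apply: (right_in G Sy); first lra.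
  by rewrite lt_neqAle ne h.
move=> t x St /andP[x0 xL] /andP[y0 yL] Sx Sy.
have nSx : ~ Scompl Sstar x by move=> h; exact: SS h Sx.
have nSy : ~ Scompl Sstar (t + x) by move=> h; exact: SS h Sy.
have [Ba ax] := afacts G x0; have [Bb xb] := bfacts G hub xL.
have [BA ay] := afacts G y0; have [BB yb] := bfacts G hub yL.
have a0 := (bS_S G Ba).1.
have SA := bS_S G BA; have SB := bS_S G BB.
rewrite /alpha /beta; split.
  suff : a_fun (Scompl Sstar) (t + x) < a_fun (Scompl Sstar) x + t by lra.
  rewrite ltNge; apply/negP => h.
  have [e|ne] := eqVneq (a_fun (Scompl Sstar) x + t) (a_fun (Scompl Sstar) (t + x)).
    apply: (SS _ SA); rewrite -e. exact: (Kadd G Ba St).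
  have h' : a_fun (Scompl Sstar) x + t < a_fun (Scompl Sstar) (t + x).
    by rewrite lt_neqAle ne h.
  have [e2|ne2] := eqVneq (a_fun (Scompl Sstar) (t + x)) (t + x).
    by apply: nSy; rewrite -e2.
  have h2 : a_fun (Scompl Sstar) (t + x) < t + x by rewrite lt_neqAle ne2 ay.
  have nz := left_out G nSx (z := a_fun (Scompl Sstar) (t + x) - t).
  have Sz : Sstar (a_fun (Scompl Sstar) (t + x) - t).
    apply: notS; first lra. by apply: nz; lra.
  apply: (SS _ SA); have := Sstar_add _ _ Sz St; by rewrite subrK.
suff : b_fun (Scompl Sstar) x + t < b_fun (Scompl Sstar) (t + x) by lra.
rewrite ltNge; apply/negP => h.
have [e|ne] := eqVneq (b_fun (Scompl Sstar) (t + x)) (b_fun (Scompl Sstar) x + t).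
  apply: (SS _ SB); rewrite e; exact: (Kadd G Bb St).
have h' : b_fun (Scompl Sstar) (t + x) < b_fun (Scompl Sstar) x + t.
  by rewrite lt_neqAle ne h.
have [e2|ne2] := eqVneq (t + x) (b_fun (Scompl Sstar) (t + x)).
  by apply: nSy; rewrite e2.
have h2 : t + x < b_fun (Scompl Sstar) (t + x) by rewrite lt_neqAle ne2 yb.
have nz := right_out G nSx (z := b_fun (Scompl Sstar) (t + x) - t).
have Sz : Sstar (b_fun (Scompl Sstar) (t + x) - t).
  apply: notS; first lra. by apply: nz; lra.
apply: (SS _ SB); have := Sstar_add _ _ Sz St; by rewrite subrK.
Qed.
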